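(* Let $H$ be a complex Hilbert space and let $A$ and $B$ be self-adjoint operators in $H$, at least one of which is positive, such that $D(A)=D(B)$ and $D(BA)\subset D(AB)$. Let $T=A+iB$ (with domain $D(A)=D(B)$). If $T^2\subset 0$, then $T\in B(H)$, $T$ is normal, and $T=0$ everywhere on $H$.
   Context: Products are taken on natural domains $D(ST)=\{x\in D(T):Tx\in D(S)\}$ and sums on $D(S+T)=D(S)\cap D(T)$. $S\subset T$ means $D(S)\subset D(T)$ and $S=T$ on $D(S)$; $T^2\subset 0$ means $T^2x=0$ for all $x\in D(T^2)$, where $0$ is the zero operator on $H$. A self-adjoint $A$ is positive if $\langle Ax,x\rangle\geq 0$ for all $x\in D(A)$. $B(H)$ is the algebra of everywhere defined bounded operators on $H$; a closed densely defined $T$ is normal if $TT^*=T^*T$. *)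

(* Defs.v *)
From HB Require Import structures.
From mathcomp Require Import all_boot all_order all_algebra.
From mathcomp Require Import complex.
From mathcomp Require Import reals.
Set Implicit Arguments. Unset Strict Implicit. Unset Printing Implicit Defensive.
Import Order.TTheory GRing.Theory Num.Theory.
Local Open Scope ring_scope.
Local Open Scope complex_scope.

Section Hilbert.
Variables (R : realType) (H : lmodType R[i]) (ip : H -> H -> R[i]).

Definition hnorm (x : H) : R := Num.sqrt (complex.Re (ip x x)).

Definition is_inner_product : Prop :=
  [/\ (forall (a : R[i]) (x y z : H), ip (a *: x + y) z = a * ip x z + ip y z),
      (forall x y : H, ip y x = (ip x y)^*),
      (forall x : H, 0 <= ip x x) &
      (forall x : H, ip x x = 0 -> x = 0)].

Definition hcauchy (u : nat -> H) : Prop :=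
  forall e : R, 0 < e -> exists N : nat, forall m n : nat,
    (N <= m)%N -> (N <= n)%N -> hnorm (u m - u n) < e.

Definition hconverges (u : nat -> H) (l : H) : Prop :=
  forall e : R, 0 < e -> exists N : nat, forall n : nat,
    (N <= n)%N -> hnorm (u n - l) < e.

Definition is_hilbert : Prop :=
  is_inner_product /\
  (forall u : nat -> H, hcauchy u -> exists l : H, hconverges u l).

(* a (possibly unbounded) operator in H: a domain and an action on it;
   the values of [app] outside [dom] are irrelevant *)
Record op := Op { dom : H -> Prop; app : H -> H }.

Definition op_linear (T : op) : Prop :=
  [/\ dom T 0,
      (forall (a : R[i]) (x y : H), dom T x -> dom T y -> dom T (a *: x + y)) &
      (forall (a : R[i]) (x y : H), dom T x -> dom T y ->
          app T (a *: x + y) = a *: app T x + app T y)].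

Definition densely_defined (T : op) : Prop :=
  forall (x : H) (e : R), 0 < e -> exists y : H, dom T y /\ hnorm (x - y) < e.

Definition op_closed (T : op) : Prop :=
  forall (u : nat -> H) (x y : H), (forall n, dom T (u n)) ->
    hconverges u x -> hconverges (fun n => app T (u n)) y ->
    dom T x /\ app T x = y.

Definition is_adjoint (T S : op) : Prop :=
  (forall y : H, dom S y <->
     exists z : H, forall x : H, dom T x -> ip (app T x) y = ip x z) /\
  (forall x y : H, dom T x -> dom S y -> ip (app T x) y = ip x (app S y)).

Definition self_adjoint (A : op) : Prop :=
  op_linear A /\ densely_defined A /\ is_adjoint A A.

Definition op_positive (A : op) : Prop :=
  forall x : H, dom A x -> 0 <= ip (app A x) x.

Definition op_mul (S T : op) : op :=
  Op (fun x => dom T x /\ dom S (app T x)) (fun x => app S (app T x)).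

Definition op_add (S T : op) : op :=
  Op (fun x => dom S x /\ dom T x) (fun x => app S x + app T x).

Definition op_scale (a : R[i]) (T : op) : op :=
  Op (dom T) (fun x => a *: app T x).

Definition op_le (S T : op) : Prop :=
  forall x : H, dom S x -> dom T x /\ app S x = app T x.

Definition op_eq (S T : op) : Prop := op_le S T /\ op_le T S.

Definition zero_op : op := Op (fun _ => True) (fun _ => 0).

Definition in_BH (T : op) : Prop :=
  (forall x : H, dom T x) /\
  exists M : R, forall x : H, hnorm (app T x) <= M * hnorm x.

Definition op_normal (T : op) : Prop :=
  [/\ op_linear T, op_closed T, densely_defined T &
      exists S : op, is_adjoint T S /\ op_eq (op_mul T S) (op_mul S T)].

End Hilbert.

(* Main.v *)
Require Import Defs.
From HB Require Import structures.
From mathcomp Require Import all_boot all_order all_algebra.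
From mathcomp Require Import complex.
From mathcomp Require Import reals.
From mathcomp Require Import classical_sets boolp.
From mathcomp Require Import ring lra.
Import Order.TTheory GRing.Theory Num.Theory.
Local Open Scope ring_scope.
Local Open Scope complex_scope.
Set Implicit Arguments. Unset Strict Implicit. Unset Printing Implicit Defensive.

Section Basics.
Variables (R : realType) (H : lmodType R[i]) (ip : H -> H -> R[i]).
Hypothesis IP : is_inner_product ip.

Local Notation Re := complex.Re.
Local Notation Im := complex.Im.

Ltac cring := apply/eqP; rewrite eq_complex /=; apply/andP; split; apply/eqP; ring.

Definition q (x : H) : R := Re (ip x x).

Lemma conjM (a b : R[i]) : (a * b)^* = a^* * b^*.
Proof. case: a => a1 a2; case: b => b1 b2; cring. Qed.

Lemma ipDZl a x y z : ip (a *: x + y) z = a * ip x z + ip y z.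
Proof. by case: IP. Qed.

Lemma ipC x y : ip y x = (ip x y)^*.
Proof. by case: IP. Qed.

Lemma ipDl x y z : ip (x + y) z = ip x z + ip y z.
Proof. by rewrite -[x in LHS]scale1r ipDZl mul1r. Qed.

Lemma ip0l z : ip 0 z = 0.
Proof.
have: ip 0 z + 0 = ip 0 z + ip 0 z by rewrite addr0 -ipDl addr0.
by move/addrI.
Qed.

Lemma ipZl a x z : ip (a *: x) z = a * ip x z.
Proof. by rewrite -[a *: x]addr0 ipDZl ip0l addr0. Qed.

Lemma ipNl x z : ip (- x) z = - ip x z.
Proof. by rewrite -scaleN1r ipZl mulN1r. Qed.

Lemma ipBl x y z : ip (x - y) z = ip x z - ip y z.
Proof. by rewrite ipDl ipNl. Qed.

Lemma ipDr x y z : ip z (x + y) = ip z x + ip z y.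
Proof.
rewrite ipC ipDl [ip x z]ipC [ip y z]ipC.
case: (ip z x) => a b; case: (ip z y) => c d; cring.
Qed.

Lemma ip0r z : ip z 0 = 0.
Proof. by rewrite ipC ip0l conjc0. Qed.

Lemma ipZr a x z : ip z (a *: x) = a^* * ip z x.
Proof. by rewrite ipC ipZl conjM [ip z x]ipC. Qed.

Lemma ipNr x z : ip z (- x) = - ip z x.
Proof. by rewrite -scaleN1r ipZr; case: (ip z x) => a b; cring. Qed.

Lemma ipBr x y z : ip z (x - y) = ip z x - ip z y.
Proof. by rewrite ipDr ipNr. Qed.

Lemma ip_ge0 x : 0 <= ip x x.
Proof. by case: IP. Qed.

Lemma ip_real x : ip x x = (q x)%:C.
Proof.
have := ip_ge0 x; rewrite /q; case: (ip x x) => a b.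
rewrite lecE /= => /andP [/eqP -> _]. by [].
Qed.

Lemma q_ge0 x : 0 <= q x.
Proof. by have := ip_ge0 x; rewrite ip_real lecR. Qed.

Lemma q_eq0 x : q x = 0 -> x = 0.
Proof. move=> h; case: IP => _ _ _; apply. by rewrite ip_real h. Qed.

Lemma q0 : q 0 = 0.
Proof. by rewrite /q ip0l. Qed.

Lemma Re_conj (z : R[i]) : Re (z^*) = Re z.
Proof. by case: z. Qed.

Lemma qD x y : q (x + y) = q x + q y + 2%:R * Re (ip x y).
Proof.
rewrite /q ipDl !ipDr [ip y x]ipC.
case: (ip x x) => a b; case: (ip y y) => c d; case: (ip x y) => e f /=; ring.
Qed.

Lemma qN x : q (- x) = q x.
Proof. by rewrite /q ipNl ipNr opprK. Qed.

Lemma qB x y : q (x - y) = q x + q y - 2%:R * Re (ip x y).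
Proof. rewrite qD qN ipNr. case: (ip x y) => a b /=; ring. Qed.

Lemma qZr (t : R) x : q (t%:C *: x) = t ^+ 2 * q x.
Proof.
rewrite /q ipZl ipZr; case: (ip x x) => a b /=; ring.
Qed.

Lemma qZi x : q ('i *: x) = q x.
Proof.
rewrite /q ipZl ipZr; case: (ip x x) => a b /=; ring.
Qed.

Lemma ReZlr (t : R) x y : Re (ip (t%:C *: x) y) = t * Re (ip x y).
Proof. rewrite ipZl; case: (ip x y) => a b /=; ring. Qed.

Lemma ReZli x y : Re (ip ('i *: x) y) = - Im (ip x y).
Proof. rewrite ipZl; case: (ip x y) => a b /=; ring. Qed.

Lemma ReZri x y : Re (ip x ('i *: y)) = Im (ip x y).
Proof. rewrite ipZr; case: (ip x y) => a b /=; ring. Qed.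

Lemma ReC x y : Re (ip y x) = Re (ip x y).
Proof. by rewrite ipC Re_conj. Qed.

Lemma cplx_eq0 (z : R[i]) : Re z = 0 -> Im z = 0 -> z = 0.
Proof. by case: z => a b /= -> ->. Qed.


Lemma quad0 (a b : R) : 0 <= b ->
  (forall t : R, 0 <= 2%:R * t * a + t ^+ 2 * b) -> a = 0.
Proof.
move=> hb h.
set s := (b + 1)^-1.
have s0 : 0 < s by rewrite invr_gt0; lra.
have hs : s * b = 1 - s by rewrite /s; field; lra.
have := h (- a * s).
have -> : 2%:R * (- a * s) * a + (- a * s) ^+ 2 * b = - (a ^+ 2 * s) - a^+2 * s ^+ 2.
  by rewrite expr2 mulrA; nra.
move=> h2.
have h3 : a ^+ 2 * s <= 0 by have := sqr_ge0 a; nra.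
have : a ^+ 2 * s = 0 by have := sqr_ge0 a; nra.
move/eqP; rewrite mulf_eq0 sqrf_eq0 (gt_eqF s0) orbF; by move/eqP.
Qed.

Lemma ip_eq0 x : ip x x = 0 -> x = 0.
Proof. by case: IP => _ _ _; apply. Qed.

Section Op.
Variable P : op H.
Hypothesis PL : op_linear P.

Lemma dom0 : dom P 0.
Proof. by case: PL. Qed.

Lemma domDZ a x y : dom P x -> dom P y -> dom P (a *: x + y).
Proof. by case: PL => _ h _; apply: h. Qed.

Lemma appDZ a x y : dom P x -> dom P y -> app P (a *: x + y) = a *: app P x + app P y.
Proof. by case: PL => _ _ h; apply: h. Qed.

Lemma domD x y : dom P x -> dom P y -> dom P (x + y).
Proof. by move=> hx hy; rewrite -[x]scale1r; apply: domDZ. Qed.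

Lemma domZ a x : dom P x -> dom P (a *: x).
Proof. by move=> hx; rewrite -[_ *: _]addr0; apply: domDZ => //; apply: dom0. Qed.

Lemma domN x : dom P x -> dom P (- x).
Proof. by move=> hx; rewrite -scaleN1r; apply: domZ. Qed.

Lemma domB x y : dom P x -> dom P y -> dom P (x - y).
Proof. by move=> hx hy; apply: domD => //; apply: domN. Qed.

Lemma app0 : app P 0 = 0.
Proof.
have h := appDZ 1 dom0 dom0.
rewrite !scale1r addr0 in h.
have: app P 0 + 0 = app P 0 + app P 0 by rewrite addr0; exact: h.
by move/addrI.
Qed.

Lemma appD x y : dom P x -> dom P y -> app P (x + y) = app P x + app P y.
Proof. by move=> hx hy; have := appDZ 1 hx hy; rewrite !scale1r. Qed.

Lemma appZ a x : dom P x -> app P (a *: x) = a *: app P x.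
Proof. by move=> hx; rewrite -[_ *: x]addr0 appDZ ?app0 ?addr0 //; apply: dom0. Qed.

Lemma appN x : dom P x -> app P (- x) = - app P x.
Proof. by move=> hx; rewrite -scaleN1r appZ // scaleN1r. Qed.

Lemma appB x y : dom P x -> dom P y -> app P (x - y) = app P x - app P y.
Proof. by move=> hx hy; rewrite appD ?appN //; apply: domN. Qed.

End Op.

Section SA.
Variable P : op H.
Hypothesis PS : self_adjoint ip P.

Lemma sa_lin : op_linear P.
Proof. by case: PS. Qed.

Lemma sa_sym x y : dom P x -> dom P y -> ip (app P x) y = ip x (app P y).
Proof. by case: PS => _ [_ [_ h]]; apply: h. Qed.

Lemma sa_dom y z : (forall x, dom P x -> ip (app P x) y = ip x z) -> dom P y.
Proof. by case: PS => _ [_ [h _]] hz; apply/h; exists z. Qed.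

Lemma sa_dense : densely_defined ip P.
Proof. by case: PS => _ []. Qed.

Lemma sa_real y : dom P y -> Im (ip (app P y) y) = 0.
Proof.
move=> hy; have := sa_sym hy hy; rewrite [ip y _]ipC.
case: (ip (app P y) y) => a b /= [] h; lra.
Qed.

Lemma pos_L1 y : op_positive ip P -> dom P y -> Re (ip (app P y) y) = 0 ->
  forall w, dom P w -> ip (app P y) w = 0.
Proof.
move=> pos hy h0.
have L : forall w, dom P w -> Re (ip (app P y) w) = 0.
  move=> w hw; apply: (quad0 (b := Re (ip (app P w) w))).
    by have := pos w hw; rewrite lecE => /andP [].
  move=> t.
  have hd : dom P (y + t%:C *: w) by apply: domD (sa_lin) _ _ hy (domZ sa_lin _ hw).
  have := pos _ hd; rewrite lecE => /andP [_].
  rewrite appD ?appZ //; try exact: sa_lin; try exact: (domZ sa_lin).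
  rewrite !ipDl !ipDr !ipZl !ipZr (sa_sym hw hy) [ip w (app P y)]ipC.
  move: h0; case: (ip (app P y) y) => a1 a2 /= ->.
  case: (ip (app P y) w) => b1 b2; case: (ip (app P w) w) => c1 c2 /=.
  move=> h; nra.
move=> w hw; apply: cplx_eq0; first exact: L.
have := L _ (domZ sa_lin 'i hw); by rewrite ReZri.
Qed.

End SA.

Lemma Re_iz (z : R[i]) : Re ('i * z) = - Im z.
Proof. case: z => a b /=; ring. Qed.

Lemma ii : 'i * 'i = -1 :> R[i].
Proof. cring. Qed.

Section Main.
Variables (A B : op H).
Hypotheses (SA : self_adjoint ip A) (SB : self_adjoint ip B).
Hypothesis Pos : op_positive ip A \/ op_positive ip B.
Hypothesis Dom : forall x, dom A x <-> dom B x.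
Hypothesis DAB : forall x, dom (op_mul B A) x -> dom (op_mul A B) x.
Hypothesis T2 : op_le (op_mul (op_add A (op_scale 'i B)) (op_add A (op_scale 'i B))) (zero_op H).

Lemma Kcore y : dom A y -> app A y + 'i *: app B y = 0 ->
  [/\ Re (ip (app A y) y) = 0, Re (ip (app B y) y) = 0 &
     forall w, dom A w -> ip (app A y) w = 0 /\ ip (app B y) w = 0].
Proof.
move=> hy e.
have hyB : dom B y by apply/Dom.
have eA : app A y = - ('i *: app B y) by apply/eqP; rewrite -addr_eq0 e.
have eB : app B y = 'i *: app A y.
  by rewrite eA scalerN scalerA ii scaleN1r opprK.
have rA := sa_real SA hy; have rB := sa_real SB hyB.
have reA : Re (ip (app A y) y) = 0.
  by rewrite eA ipNl ipZl; move: rB; case: (ip (app B y) y) => a b /= ->; ring.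
have reB : Re (ip (app B y) y) = 0.
  by rewrite eB ipZl Re_iz rA oppr0.
split => //.
case: Pos => pos.
- have h := pos_L1 SA pos hy reA.
  by move=> w hw; split; [apply: h | rewrite eB ipZl h // mulr0].
- have h := pos_L1 SB pos hyB reB.
  move=> w hw; have hwB : dom B w by apply/Dom.
  by split; [rewrite eA ipNl ipZl h // mulr0 oppr0 | apply: h].
Qed.

Lemma K u : dom A u -> dom A (app A u) -> app A u = 0 /\ app B u = 0.
Proof.
move=> hu hAu.
have LA := sa_lin SA; have LB := sa_lin SB.
have huB : dom B u by apply/Dom.
have [_ hBu] : dom B u /\ dom A (app B u).
  by apply: DAB; split => //; apply/Dom.
have hy : dom A (app A u + 'i *: app B u) by apply: domD LA _ _ hAu (domZ LA _ hBu).
have hyB : dom B (app A u + 'i *: app B u) by apply/Dom.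
have eT : app A (app A u + 'i *: app B u) + 'i *: app B (app A u + 'i *: app B u) = 0.
  have := T2 (x := u).
  by case => //=.
have [_ _ hw] := Kcore hy eT.
have [h1 h2] := hw u hu.
have y0 : app A u + 'i *: app B u = 0.
  apply: ip_eq0.
  rewrite [in ip (_ + _) _]ipDl [in ip ('i *: _) _]ipZl.
  rewrite (sa_sym SA hu hy) (sa_sym SB huB hyB).
  rewrite [ip u (app A _)]ipC [ip u (app B _)]ipC h1 h2 conjc0 mulr0 addr0.
  done.
have [_ _ hw'] := Kcore hu y0.
split; apply: ip_eq0.
- by have [-> _] := hw' _ hAu.
- by have [_ ->] := hw' _ hBu.
Qed.

End Main.

Definition rcv (s : nat -> R) := forall e : R, 0 < e -> exists N : nat,
  forall n : nat, (N <= n)%N -> `|s n| < e.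

Definition qcv (c : nat -> H) := forall e : R, 0 < e -> exists N : nat,
  forall n : nat, (N <= n)%N -> q (c n) < e.

Definition en (n : nat) : R := (n.+1%:R)^-1.

Lemma en_gt0 n : 0 < en n.
Proof. by rewrite /en invr_gt0 ltr0n. Qed.

Lemma en_small e : 0 < e -> exists N, forall n, (N <= n)%N -> en n < e.
Proof.
move=> e0; exists (Num.bound (e^-1)) => n hn.
have ei : 0 < e^-1 by rewrite invr_gt0.
have hb := archi_boundP (ltW ei).
have hk : (Num.bound e^-1)%:R <= n.+1%:R :> R by rewrite ler_nat; apply: leqW.
have k0 : 0 < n.+1%:R :> R by rewrite ltr0n.
have h1 : n.+1%:R * en n = 1 by rewrite /en mulfV // gt_eqF.
have h2 : e * e^-1 = 1 by rewrite mulfV // gt_eqF.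
have := en_gt0 n; nra.
Qed.

Lemma en_mono m n : (m <= n)%N -> en n <= en m.
Proof.
move=> h; rewrite /en lef_pV2 ?posrE ?ltr0n // ler_nat //.
Qed.

Lemma rcv_en : rcv en.
Proof.
move=> e e0; have [N hN] := en_small e0; exists N => n hn.
by rewrite gtr0_norm ?en_gt0 //; apply: hN.
Qed.

Lemma rcv_add s1 s2 : rcv s1 -> rcv s2 -> rcv (fun n => s1 n + s2 n).
Proof.
move=> h1 h2 e e0.
have e2 : 0 < e / 2%:R by rewrite divr_gt0 ?ltr0n.
have [N1 H1] := h1 _ e2; have [N2 H2] := h2 _ e2.
exists (maxn N1 N2) => n hn.
have a1 := H1 n (leq_trans (leq_maxl _ _) hn).
have a2 := H2 n (leq_trans (leq_maxr _ _) hn).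
apply: (le_lt_trans (ler_normD _ _)).
have : e / 2%:R + e / 2%:R = e by field.
lra.
Qed.

Lemma rcv_scale k s : rcv s -> rcv (fun n => k * s n).
Proof.
move=> h e e0.
have k0 : 0 < `|k| + 1 by have := normr_ge0 k; lra.
have [N HN] := h (e / (`|k| + 1)) (divr_gt0 e0 k0).
exists N => n hn; have a := HN n hn.
rewrite normrM.
have hh : e / (`|k| + 1) * (`|k| + 1) = e by field; lra.
have := normr_ge0 k; have := normr_ge0 (s n); nra.
Qed.

Lemma rcv_ge K s : rcv s -> (forall n, 0 <= K + s n) -> 0 <= K.
Proof.
move=> h hK; rewrite leNgt; apply/negP => K0.
have nK : 0 < - K by rewrite oppr_gt0.
have [N HN] := h (- K) nK.
have := HN N (leqnn N); have := hK N.
rewrite ltr_norml => h1 /andP [h2 h3]; lra.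
Qed.

Lemma rcv_eq K s : rcv s -> (forall n, K = s n) -> K = 0.
Proof.
move=> h hK; apply/eqP; rewrite eq_le; apply/andP; split.
- rewrite -oppr_ge0; apply: (rcv_ge (s := s)) => // n; rewrite (hK n); lra.
- apply: (rcv_ge (s := fun n => - s n)) => [|n]; last by rewrite (hK n); lra.
  move=> e e0; have [N HN] := h e e0; exists N => n hn; rewrite normrN; exact: HN.
Qed.

Lemma hnorm_lt v e : 0 < e -> (hnorm ip v < e) = (q v < e ^+ 2).
Proof.
move=> e0; rewrite /hnorm -/(q v).
have -> : e = Num.sqrt (e ^+ 2) by rewrite sqrtr_sqr gtr0_norm.
by rewrite ltr_sqrt ?exprn_gt0 // sqrtr_sqr gtr0_norm.
Qed.

Lemma conv_qcv s l : hconverges ip s l -> qcv (fun n => s n - l).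
Proof.
move=> h e e0.
have se : 0 < Num.sqrt e by rewrite sqrtr_gt0.
have [N HN] := h _ se; exists N => n hn.
by have := HN n hn; rewrite hnorm_lt // sqr_sqrtr // ltW.
Qed.

Lemma ReZrr (t : R) x y : Re (ip x (t%:C *: y)) = t * Re (ip x y).
Proof. rewrite ipZr; case: (ip x y) => a b /=; ring. Qed.

Lemma qcv_cont c b : qcv c -> rcv (fun n => Re (ip (c n) b)).
Proof.
move=> h e e0.
have qb := q_ge0 b.
set sg := e / (q b + 1).
have sg0 : 0 < sg by rewrite divr_gt0 //; lra.
have hsg : sg * (q b + 1) = e by rewrite /sg; field; lra.
have [N HN] := h (e * sg) (mulr_gt0 e0 sg0).
exists N => n hn; have a := HN n hn.
have p1 := q_ge0 (c n - sg%:C *: b).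
have p2 := q_ge0 (c n + sg%:C *: b).
rewrite qB qZr ReZrr in p1; rewrite qD qZr ReZrr in p2.
rewrite ltr_norml; apply/andP; split; nra.
Qed.

Lemma qcv_i c : qcv c -> qcv (fun n => 'i *: c n).
Proof. by move=> h e e0; have [N HN] := h e e0; exists N => n hn; rewrite qZi; apply: HN. Qed.


Lemma cauchy_of_bound s : (forall n m, q (s n - s m) <= 2%:R * en n + 2%:R * en m) ->
  hcauchy ip s.
Proof.
move=> h e e0.
have e4 : 0 < e ^+ 2 / 4%:R by rewrite divr_gt0 ?exprn_gt0 ?ltr0n.
have [N HN] := en_small e4.
exists N => m n hm hn; rewrite hnorm_lt //.
have := h m n; have := HN m hm; have := HN n hn.
have : e ^+ 2 / 4%:R * 4%:R = e ^+ 2 by field.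
lra.
Qed.

Lemma Re_Im0 (D : H -> Prop) (f : H -> R[i]) :
  (forall w, D w -> Re (f w) = 0) ->
  (forall w, D w -> D ('i *: w) /\ f ('i *: w) = 'i * f w) ->
  forall w, D w -> f w = 0.
Proof.
move=> h1 h2 w hw; apply: cplx_eq0; first exact: h1.
have [hw' e] := h2 w hw; have := h1 _ hw'; rewrite e Re_iz; lra.
Qed.

Lemma Re_addc (a b : R[i]) : Re (a + b) = Re a + Re b.
Proof. by case: a; case: b. Qed.

Lemma dense_zero (P : op H) z : densely_defined ip P ->
  (forall y, dom P y -> ip y z = 0) -> z = 0.
Proof.
move=> hd hz.
have h n : exists y, dom P y /\ hnorm ip (z - y) < en n by apply: hd; apply: en_gt0.
pose y n := proj1_sig (cid (h n)).
have hy n : dom P (y n) /\ hnorm ip (z - y n) < en n := proj2_sig (cid (h n)).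
have c : qcv (fun n => z - y n).
  move=> e e0; have [N HN] := en_small e0; exists N => n hn.
  have [_ h1] := hy n; move: h1; rewrite hnorm_lt ?en_gt0 // => h1.
  have h2 := HN n hn; have h3 := en_gt0 n.
  have h4 : en n <= 1 by rewrite /en invf_le1 ?ler1n ?ltr0n.
  nra.
apply: q_eq0; apply: (rcv_eq (qcv_cont z c)) => n.
rewrite ipBl (hz _ (hy n).1) subr0 //.
Qed.

Section Surj.
Variable P : op H.
Hypothesis PS : self_adjoint ip P.
Hypothesis HC : forall u : nat -> H, hcauchy ip u -> exists l, hconverges ip u l.
Variable x : H.
Hypothesis hx : dom P x.

Let LP := sa_lin PS.
Let g v := app P v + 'i *: v.
Let F v := q (g v - x).
Let E : set R := [set r | exists v, dom P v /\ r = F v].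

Lemma E_inf : has_inf E.
Proof.
split; first by exists (F 0); exists 0; split => //; apply: dom0.
by exists 0 => r [v [_ ->]]; apply: q_ge0.
Qed.

Let d := inf E.

Lemma d_le v : dom P v -> d <= F v.
Proof. by move=> hv; apply: ge_inf; [case: E_inf | exists v]. Qed.

Lemma minseq : exists u : nat -> H, forall n, dom P (u n) /\ F (u n) < d + en n.
Proof.
have h n : exists v, dom P v /\ F v < d + en n.
  have [r [v [hv ->]] hr] := inf_adherent (en_gt0 n) E_inf.
  by exists v.
exists (fun n => proj1_sig (cid (h n))) => n; exact: proj2_sig (cid (h n)).
Qed.

Lemma gD v w : dom P v -> dom P w -> g (v + w) = g v + g w.
Proof. by move=> hv hw; rewrite /g appD // scalerDr addrACA. Qed.

Lemma gZ a v : dom P v -> g (a *: v) = a *: g v.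
Proof. by move=> hv; rewrite /g appZ // scalerDr !scalerA mulrC. Qed.

Lemma gB v w : dom P v -> dom P w -> g (v - w) = g v - g w.
Proof. by move=> hv hw; rewrite /g appB // scalerBr opprD addrACA. Qed.

Lemma iso v : dom P v -> q (g v) = q (app P v) + q v.
Proof.
move=> hv; rewrite /g qD qZi ReZri sa_real //; lra.
Qed.

Lemma two_half : (2%:R : R)%:C * ((2%:R : R)^-1)%:C = 1.
Proof.
have h : (2%:R : R) * 2%:R^-1 = 1 by rewrite mulfV // pnatr_eq0.
apply/eqP; rewrite eq_complex /= h; apply/andP; split; apply/eqP; ring.
Qed.

Lemma two_C (y : H) : (2%:R : R)%:C *: y = y + y.
Proof.
have -> : (2%:R : R)%:C = 1 + 1 by cring.
by rewrite scalerDl scale1r.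
Qed.

Lemma surj : exists u, dom P u /\ app P u + 'i *: u = x.
Proof.
have [u hu] := minseq.
have hD n : dom P (u n) by case: (hu n).
pose a n := g (u n) - x.
have bnd n m : q (a n - a m) <= 2%:R * en n + 2%:R * en m.
  have par : q (a n - a m) + q (a n + a m) = 2%:R * q (a n) + 2%:R * q (a m).
    rewrite qB qD; lra.
  pose h := ((2%:R : R)^-1)%:C *: (u n + u m).
  have hh : dom P h by apply: (domZ LP); apply: (domD LP).
  have e : a n + a m = (2%:R : R)%:C *: (g h - x).
    rewrite /h gZ; last by apply: (domD LP).
    rewrite gD // scalerBr scalerA two_half scale1r two_C /a opprD addrACA //.
  have := d_le hh; rewrite /F.
  have := hu n; have := hu m; rewrite /F -/(a n) -/(a m) => -[_ h1] [_ h2] h3.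
  move: par; rewrite e qZr => par.
  lra.
have bnd2 n m : q (u n - u m) <= 2%:R * en n + 2%:R * en m /\
                q (app P (u n) - app P (u m)) <= 2%:R * en n + 2%:R * en m.
  have := bnd n m.
  have -> : a n - a m = g (u n - u m) by rewrite gB // /a opprB addrA subrK.
  rewrite iso ?appB //; try apply: domB => //.
  have := q_ge0 (u n - u m); have := q_ge0 (app P (u n) - app P (u m)).
  move=> h1 h2 h3; split; lra.
have [ul hul] := HC (cauchy_of_bound (fun n m => (bnd2 n m).1)).
have [v hv] := HC (cauchy_of_bound (fun n m => (bnd2 n m).2)).
have c1 := conv_qcv hul; have c2 := conv_qcv hv.
have Ha : forall w, dom P w -> ip (app P w) ul - ip w v = 0.
  apply: (Re_Im0 (D := dom P) (f := fun w => ip (app P w) ul - ip w v)).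
    move=> w hw.
    apply: (rcv_eq (s := fun n => -1 * Re (ip (u n - ul) (app P w))
                               + Re (ip (app P (u n) - v) w))).
      by apply: rcv_add; [apply: rcv_scale; apply: qcv_cont | apply: qcv_cont].
    move=> n.
    rewrite !ipBl [ip (u n) _]ipC [ip ul _]ipC [ip (app P (u n)) _]ipC [ip v _]ipC.
    rewrite (sa_sym PS hw (hD n)).
    case: (ip w (app P (u n))) => a1 a2; case: (ip (app P w) ul) => b1 b2;
    case: (ip w v) => c3 c4 /=; ring.
  move=> w hw; split; first by apply: domZ.
  by rewrite appZ // !ipZl mulrBr.
have hul_dom : dom P ul.
  apply: (sa_dom PS (z := v)) => w hw; apply/eqP; rewrite -subr_eq0; apply/eqP.
  exact: Ha.
pose r := v + 'i *: ul - x.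
have Hc : forall w, dom P w -> ip (g w) r = 0.
  apply: (Re_Im0 (D := dom P) (f := fun w => ip (g w) r)); last first.
    move=> w hw; split; first by apply: domZ.
    by rewrite gZ // ipZl.
  move=> w hw; rewrite /= ReC.
  apply: (quad0 (b := q (g w))); first exact: q_ge0.
  move=> t.
  pose s n := en n + 2%:R * t * (Re (ip (app P (u n) - v) (g w))
                                 + Re (ip ('i *: (u n - ul)) (g w))).
  apply: (rcv_ge (s := s)).
    apply: rcv_add; first exact: rcv_en.
    apply: rcv_scale; apply: rcv_add; first exact: qcv_cont.
    by apply: qcv_cont; apply: qcv_i.
  move=> n.
  have hnt : dom P (u n + t%:C *: w) by apply: domD => //; apply: domZ.
  have e1 : g (u n + t%:C *: w) = g (u n) + t%:C *: g w.
    by rewrite gD ?gZ //; apply: (domZ LP).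
  have := d_le hnt; rewrite /F e1.
  have -> : g (u n) + t%:C *: g w - x = a n + t%:C *: g w.
    by rewrite /a addrAC.
  rewrite qD qZr ReZrr.
  have -> : Re (ip (a n) (g w)) = Re (ip r (g w)) + Re (ip (app P (u n) - v) (g w))
                                 + Re (ip ('i *: (u n - ul)) (g w)).
    rewrite -!Re_addc; congr Re.
    rewrite /a /r /g !ipDl ?ipNl ?ipZl ?ipDl ?ipNl; ring.
  have := hu n; rewrite /F -/(a n) => -[_ h1].
  rewrite /s; lra.
have hr : dom P r.
  apply: (sa_dom PS (z := 'i *: r)) => w hw.
  have := Hc w hw; rewrite /g ipDl ipZl ipZr.
  case: (ip (app P w) r) => a1 a2; case: (ip w r) => b1 b2 /= [] h1 h2.
  apply/eqP; rewrite eq_complex /=; apply/andP; split; apply/eqP; lra.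
have r0 : r = 0.
  apply: q_eq0.
  have := Hc r hr; rewrite /g ipDl ipZl.
  have := sa_real PS hr; rewrite ip_real.
  case: (ip (app P r) r) => a1 a2 /= -> [] h1 h2; lra.
have hv_dom : dom P v.
  have -> : v = x - 'i *: ul.
    have : v + 'i *: ul - x = 0 := r0.
    by move/eqP; rewrite subr_eq0 => /eqP <-; rewrite addrK.
  by apply: (domB LP) => //; apply: (domZ LP).
have hPul : app P ul = v.
  apply/eqP; rewrite -subr_eq0; apply/eqP.
  apply: (dense_zero (sa_dense PS)) => w hw.
  rewrite ipBr -(sa_sym PS hw hul_dom); exact: Ha.
exists ul; split => //.
by rewrite hPul; apply/eqP; rewrite -subr_eq0; apply/eqP.
Qed.

End Surj.
End Basics.

Unset Implicit Arguments.

Theorem theorem2p8 (R : realType) (H : lmodType R[i]) (ip : H -> H -> R[i])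
    (A B : op H) :
  is_hilbert ip ->
  self_adjoint ip A -> self_adjoint ip B ->
  (op_positive ip A \/ op_positive ip B) ->
  (forall x : H, dom A x <-> dom B x) ->
  (forall x : H, dom (op_mul B A) x -> dom (op_mul A B) x) ->
  let T := op_add A (op_scale 'i B) in
  op_le (op_mul T T) (zero_op H) ->
  [/\ in_BH ip T, op_normal ip T & forall x : H, dom T x /\ app T x = 0].
Proof.
move=> hil SA SB Pos Dom DAB T T2.
have IP := hil.1; have HC := hil.2.
have LA := sa_lin SA; have LB := sa_lin SB.
have Z : forall x, dom A x -> app A x = 0 /\ app B x = 0.
  move=> x hx; have [u [hu e]] := surj IP SA HC hx.
  have hAu : dom A (app A u).
    have -> : app A u = x - 'i *: u by rewrite -e addrK.
    by apply: (domB LA) => //; apply: (domZ LA).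
  have [Au0 _] := K IP SA SB Pos Dom DAB T2 hu hAu.
  have ex : x = 'i *: u by rewrite -e Au0 add0r.
  have Ax0 : app A x = 0 by rewrite ex appZ // Au0 scaler0.
  have hA0 : dom A (app A x) by rewrite Ax0; apply: (dom0 LA).
  by have [_ ->] := K IP SA SB Pos Dom DAB T2 hx hA0.
have allA : forall y, dom A y.
  move=> y; apply: (sa_dom SA (z := 0)) => x hx.
  by rewrite (Z x hx).1 ip0l // ip0r.
have allB y : dom B y by apply/Dom.
have Tx : forall x, dom T x /\ app T x = 0.
  move=> x; split; first by split; [apply: allA | apply: allB].
  by rewrite /T /= (Z x (allA x)).1 (Z x (allA x)).2 scaler0 addr0.
have hn0 : hnorm ip 0 = 0 by rewrite /hnorm ip0l // sqrtr0.
split.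
- split; first by move=> x; exact: (Tx x).1.
  by exists 0 => x; rewrite (Tx x).2 hn0 mul0r.
- split.
  + split; first exact: (Tx 0).1.
      by move=> a x y _ _; exact: (Tx _).1.
    by move=> a x y _ _; rewrite !(Tx _).2 scaler0 addr0.
  + move=> u x y _ _ hc; split; first exact: (Tx x).1.
    rewrite (Tx x).2; apply/esym; apply: (q_eq0 IP).
    have := q_ge0 IP y; rewrite le_eqVlt => /orP [/eqP <- // | qy].
    have [N HN] := conv_qcv hc qy.
    by have := HN N (leqnn N); rewrite (Tx _).2 sub0r (qN IP) ltxx.
  + move=> x e e0; exists x; split; first exact: (Tx x).1.
    by rewrite subrr hn0.
  + exists T; split.
      split.
        move=> y; split => _; last exact: (Tx y).1.
        by exists 0 => x _; rewrite (Tx x).2 ip0l // ip0r.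
      by move=> x y _ _; rewrite !(Tx _).2 ip0l // ip0r.
    by split; move=> x hx; split.
- exact: Tx.
Qed.
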